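(* Let $\Lambda$ be an artin algebra, $C$ a $\Lambda$-module, and $f: X\to Y$ a right $C$-determined map. Then $f$ is surjective if and only if $f\cdot\operatorname{Hom}(C,X)\supseteq \operatorname{Hom}(C,\mathcal P,Y)$.
   Context: Modules are finite length left $\Lambda$-modules. $f: X\to Y$ is right $C$-determined if every $f': X'\to Y$ such that $f'\phi$ factors through $f$ for all $\phi: C\to X'$ itself factors through $f$. $\operatorname{Hom}(C,\mathcal P,Y)$ is the set of maps $C\to Y$ which factor through a projective module; $f\cdot \operatorname{Hom}(C,X)$ is the set of maps $C\to Y$ that factor through $f$. *)

(* Defs.v *)
From HB Require Import structures.
From mathcomp Require Import all_boot all_order all_algebra.
Set Implicit Arguments. Unset Strict Implicit. Unset Printing Implicit Defensive.
Import GRing.Theory.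
Local Open Scope ring_scope.

Definition is_ideal (k : comPzRingType) (I : k -> Prop) : Prop :=
  [/\ I 0, (forall x y, I x -> I y -> I (x + y)) & (forall a x, I x -> I (a * x))].

Definition artinian_ring (k : comPzRingType) : Prop :=
  forall I : nat -> (k -> Prop), (forall n, is_ideal (I n)) ->
    (forall n x, I n.+1 x -> I n x) ->
    exists N, forall n, (N <= n)%N -> forall x, I N x -> I n x.

Definition fin_gen_over (k : comPzRingType) (L : algType k) : Prop :=
  exists (n : nat) (v : 'I_n -> L), forall x : L,
    exists c : 'I_n -> k, x = \sum_(i < n) c i *: v i.

(* Artin algebra: k commutative artinian, Lambda a k-algebra (k acts
   centrally) finitely generated as a k-module. *)
Definition artin_algebra (k : comPzRingType) (L : algType k) : Prop :=
  artinian_ring k /\ fin_gen_over L.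

Definition is_submodule (L : pzRingType) (M : lmodType L) (S : M -> Prop) : Prop :=
  [/\ S 0, (forall x y, S x -> S y -> S (x + y)) & (forall (a : L) x, S x -> S (a *: x))].

Definition strict_subset (T : Type) (A B : T -> Prop) : Prop :=
  (forall x, A x -> B x) /\ exists x, B x /\ ~ A x.

Definition finite_length (L : pzRingType) (M : lmodType L) : Prop :=
  exists n : nat, forall (m : nat) (S : nat -> (M -> Prop)),
    (forall i, (i <= m)%N -> is_submodule (S i)) ->
    (forall i, (i < m)%N -> strict_subset (S i) (S i.+1)) ->
    (m <= n)%N.

Definition surjective_map (A B : Type) (g : A -> B) : Prop :=
  forall b, exists a, g a = b.

Definition projective_mod (L : pzRingType) (P : lmodType L) : Prop :=
  forall (M N : lmodType L), finite_length M -> finite_length N ->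
    forall (g : {linear M -> N}) (h : {linear P -> N}),
      surjective_map g -> exists l : {linear P -> M}, forall p, g (l p) = h p.

Definition factors_through (L : pzRingType) (C X Y : lmodType L)
  (u : C -> Y) (f : {linear X -> Y}) : Prop :=
  exists h : {linear C -> X}, forall c, f (h c) = u c.

Definition right_determined (L : pzRingType) (C X Y : lmodType L)
  (f : {linear X -> Y}) : Prop :=
  forall (X' : lmodType L), finite_length X' ->
    forall f' : {linear X' -> Y},
      (forall phi : {linear C -> X'}, factors_through (fun c => f' (phi c)) f) ->
      exists h : {linear X' -> X}, forall x, f (h x) = f' x.

(* u : C -> Y belongs to Hom(C, P, Y): it factors through a projective
   (finite length) module. *)
Definition factors_through_projective (L : pzRingType) (C Y : lmodType L)
  (u : {linear C -> Y}) : Prop :=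
  exists (P : lmodType L) (a : {linear C -> P}) (b : {linear P -> Y}),
    [/\ finite_length P, projective_mod P & forall c, b (a c) = u c].

(* Main.v *)
Require Import Defs.
From HB Require Import structures.
From mathcomp Require Import all_boot all_order all_algebra.
From mathcomp Require classical_sets.
From Stdlib Require Import Classical ClassicalEpsilon.
Set Implicit Arguments. Unset Strict Implicit. Unset Printing Implicit Defensive.
Import GRing.Theory.
Local Open Scope ring_scope.

Definition bnd (T : Type) (B : (T -> Prop) -> Prop) (n : nat) :=
  forall (m : nat) (S : nat -> (T -> Prop)), (forall i, (i <= m)%N -> B (S i)) ->
    (forall i, (i < m)%N -> strict_subset (S i) (S i.+1)) -> (m <= n)%N.

Definition chain_to (T : Type) (B : (T -> Prop) -> Prop) (j : nat) (S : nat -> (T -> Prop)) (Q : T -> Prop) :=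
  [/\ (forall i, (i <= j)%N -> B (S i)), (forall i, (i < j)%N -> strict_subset (S i) (S i.+1))
   & (forall y, S j y -> Q y)].

Lemma ext_keep T (B : (T -> Prop) -> Prop) j S (Q Q' : T -> Prop) :
  chain_to B j S Q -> (forall y, Q y -> Q' y) -> chain_to B j S Q'.
Proof. by case=> h1 h2 h3 hQ; split=> // y /h3 /hQ. Qed.

Lemma ext_grow T (B : (T -> Prop) -> Prop) j S (Q Q' : T -> Prop) :
  chain_to B j S Q -> B Q' -> (forall y, Q y -> Q' y) -> (exists y, Q' y /\ ~ Q y) ->
  chain_to B j.+1 (fun i => if i == j.+1 then Q' else S i) Q'.
Proof.
case=> h1 h2 h3 BQ' hQ [y [y1 y2]]; split.
- move=> i; rewrite leq_eqVlt ltnS; case: eqP => [_ _|_ /= hi]; first exact: BQ'.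
  exact: h1.
- move=> i; rewrite ltnS leq_eqVlt; case/orP => [/eqP ->|hi].
    rewrite eqxx (_ : (j == j.+1) = false); last by elim: j {h1 h2 h3}.
    split; first by move=> x /h3 /hQ.
    by exists y; split => // /h3.
  rewrite (_ : (i.+1 == j.+1) = false); last by rewrite eqSS; apply/negbTE; rewrite neq_ltn hi.
  rewrite (_ : (i == j.+1) = false); last by apply/negbTE; rewrite neq_ltn (ltn_trans hi).
  exact: h2.
- by rewrite eqxx.
Qed.

Lemma chain_bnd T (B : (T -> Prop) -> Prop) n j S Q : bnd B n -> chain_to B j S Q -> (j <= n)%N.
Proof. by move=> hb [h1 h2 _]; apply: hb h1 h2. Qed.

Lemma bnd_pair (T T1 T2 : Type) (B : (T->Prop)->Prop) (B1 : (T1->Prop)->Prop)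
  (B2 : (T2->Prop)->Prop) (p1 : (T->Prop) -> (T1->Prop)) (p2 : (T->Prop) -> (T2->Prop)) n1 n2 :
  bnd B1 n1 -> bnd B2 n2 ->
  (forall A, B A -> B1 (p1 A)) -> (forall A, B A -> B2 (p2 A)) ->
  (forall A A', B A -> B A' -> (forall x, A x -> A' x) -> forall y, p1 A y -> p1 A' y) ->
  (forall A A', B A -> B A' -> (forall x, A x -> A' x) -> forall y, p2 A y -> p2 A' y) ->
  (forall A A', B A -> B A' -> (forall x, A x -> A' x) -> (forall y, p1 A' y -> p1 A y) ->
     (forall y, p2 A' y -> p2 A y) -> forall x, A' x -> A x) ->
  bnd B (n1 + n2).
Proof.
move=> hb1 hb2 hB1 hB2 m1 m2 det m S hS hst.
suff: forall j, (j <= m)%N -> exists j1 S1 j2 S2, [/\ (j <= j1 + j2)%N,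
   chain_to B1 j1 S1 (p1 (S j)) & chain_to B2 j2 S2 (p2 (S j))].
  move=> /(_ m (leqnn m)) [j1 [S1 [j2 [S2 [hj c1 c2]]]]].
  apply: (leq_trans hj); apply: leq_add; [exact: chain_bnd c1|exact: chain_bnd c2].
elim=> [_|j IH hj].
  exists 0%N, (fun _ => p1 (S 0%N)), 0%N, (fun _ => p2 (S 0%N)); split => //.
    by split => // i _; apply: hB1; apply: hS.
  by split => // i _; apply: hB2; apply: hS.
have [j1 [S1 [j2 [S2 [hjj c1 c2]]]]] := IH (ltnW hj).
have hSj := hS j (ltnW hj); have hSj1 := hS j.+1 hj.
have [sub1 [w [w1 w2]]] := hst j hj.
have mo1 := m1 _ _ hSj hSj1 sub1; have mo2 := m2 _ _ hSj hSj1 sub1.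
case: (classic (exists y, p1 (S j.+1) y /\ ~ p1 (S j) y)) => [e1|ne1].
  exists j1.+1, (fun i => if i == j1.+1 then p1 (S j.+1) else S1 i), j2, S2; split.
  - by rewrite addSn.
  - by apply: ext_grow c1 (hB1 _ hSj1) mo1 e1.
  - exact: ext_keep c2 mo2.
case: (classic (exists y, p2 (S j.+1) y /\ ~ p2 (S j) y)) => [e2|ne2].
  exists j1, S1, j2.+1, (fun i => if i == j2.+1 then p2 (S j.+1) else S2 i); split.
  - by rewrite addnS.
  - exact: ext_keep c1 mo1.
  - by apply: ext_grow c2 (hB2 _ hSj1) mo2 e2.
exfalso; apply: w2; apply: (det _ _ hSj hSj1 sub1) => // y hy; apply: NNPP => hn;
  [apply: ne1|apply: ne2]; by exists y.
Qed.


Definition subin (R : pzRingType) (M : lmodType R) (N : M -> Prop) (A : M -> Prop) :=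
  is_submodule A /\ (forall x, A x -> N x).
Definition flen (R : pzRingType) (M : lmodType R) (N : M -> Prop) :=
  exists n, bnd (subin N) n.
Definition sumP (T : zmodType) (A H : T -> Prop) : T -> Prop :=
  fun y => exists a h, [/\ A a, H h & y = a + h].
Definition capP (T : Type) (A H : T -> Prop) : T -> Prop := fun y => A y /\ H y.

Lemma subN (R : pzRingType) (M : lmodType R) (A : M -> Prop) x :
  is_submodule A -> A x -> A (- x).
Proof. by case=> _ _ hs hx; rewrite -scaleN1r; apply: hs. Qed.

Lemma subB (R : pzRingType) (M : lmodType R) (A : M -> Prop) x y :
  is_submodule A -> A x -> A y -> A (x - y).
Proof. move=> hA hx hy; case: (hA) => _ ha _; apply: ha => //; exact: subN. Qed.

Lemma sumP_sub (R : pzRingType) (M : lmodType R) (A H : M -> Prop) :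
  is_submodule A -> is_submodule H -> is_submodule (sumP A H).
Proof.
case=> a0 aa az [h0 ha hz]; split.
- by exists 0, 0; rewrite addr0.
- move=> x y [a [h [xa xh ->]]] [a' [h' [ya yh ->]]].
  exists (a + a'), (h + h'); split; [exact: aa|exact: ha|].
  by rewrite addrACA.
- move=> r x [a [h [xa xh ->]]]; exists (r *: a), (r *: h); split;
  [exact: az|exact: hz|by rewrite scalerDr].
Qed.

Lemma capP_sub (R : pzRingType) (M : lmodType R) (A H : M -> Prop) :
  is_submodule A -> is_submodule H -> is_submodule (capP A H).
Proof.
case=> a0 aa az [h0 ha hz]; split => //.
- by move=> x y [? ?] [? ?]; split; [exact: aa|exact: ha].
- by move=> r x [? ?]; split; [exact: az|exact: hz].
Qed.

Lemma flen_ext (R : pzRingType) (M : lmodType R) (N H : M -> Prop) n2 :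
  is_submodule N -> subin N H -> flen H ->
  bnd (fun T => [/\ is_submodule T, (forall x, H x -> T x) & (forall x, T x -> N x)]) n2 ->
  flen N.
Proof.
move=> hN [hH HN] [n1 b1] b2; exists (n1 + n2)%N.
apply: (bnd_pair (p1 := fun A => capP A H) (p2 := fun A => sumP A H) b1 b2).
- move=> A [hA AN]; split; first exact: capP_sub.
  by move=> x [].
- move=> A [hA AN]; split; first exact: sumP_sub.
    by move=> x hx; exists 0, x; split => //; [case: hA|rewrite add0r].
  move=> x [a [h [ha hh ->]]]; case: hN => _ nadd _; apply: nadd; [exact: AN|exact: HN].
- by move=> A A' _ _ sub y [? ?]; split => //; apply: sub.
- by move=> A A' _ _ sub y [a [h [? ? ->]]]; exists a, h; split => //; apply: sub.
- move=> A A' [hA _] [hA' _] sub s1 s2 x xA'.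
  have : sumP A' H x by exists x, 0; split => //; [case: hH|rewrite addr0].
  move=> /s2 [a [h [ha hh ex]]].
  have hx : h = x - a by rewrite ex addrC addKr.
  have : capP A' H h by split => //; rewrite hx; apply: subB => //; apply: sub.
  move=> /s1 [hA1 _]; rewrite ex; case: hA => _ aadd _; exact: aadd.
Qed.

Lemma flen_map (R : comPzRingType) (M : lmodType R) (N : M -> Prop) (c : R) :
  is_submodule N ->
  flen (fun x => N x /\ c *: x = 0) -> flen (fun y => exists x, N x /\ y = c *: x) ->
  flen N.
Proof.
move=> hN [n1 b1] [n2 b2]; exists (n1 + n2)%N.
apply: (bnd_pair (p1 := fun A => capP A (fun x => N x /\ c *: x = 0))
   (p2 := fun A => (fun y => exists x, A x /\ y = c *: x)) b1 b2).
- move=> A [hA AN]; split; last by move=> x [].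
  apply: capP_sub => //; split.
  + by split; [case: hN|rewrite scaler0].
  + move=> x y [nx cx] [ny cy]; split; first by case: hN => _ na _; apply: na.
    by rewrite scalerDr cx cy addr0.
  + move=> r x [nx cx]; split; first by case: hN => _ _ nz; apply: nz.
    by rewrite scalerA mulrC -scalerA cx scaler0.
- move=> A [hA AN]; split.
    case: (hA) => a0 aa az; split.
    + by exists 0; rewrite scaler0.
    + by move=> x y [a [? ->]] [b [? ->]]; exists (a + b); rewrite scalerDr; split => //; apply: aa.
    + move=> r x [a [? ->]]; exists (r *: a); split; first exact: az.
      by rewrite !scalerA mulrC.
  by move=> y [x [xA ->]]; exists x; split => //; apply: AN.
- by move=> A A' _ _ sub y [? ?]; split => //; apply: sub.
- by move=> A A' _ _ sub y [x [? ->]]; exists x; split => //; apply: sub.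
- move=> A A' [hA AN] [hA' AN'] sub s1 s2 x xA'.
  have : exists y, A' y /\ c *: x = c *: y by exists x; split.
  move=> /s2 [y [yA ey]].
  have : capP A' (fun x => N x /\ c *: x = 0) (x - y).
    split; first by apply: subB => //; apply: sub.
    split; first by apply: subB => //; apply: AN' => //; apply: sub.
    by rewrite scalerBr ey subrr.
  move=> /s1 [h1 _]; have -> : x = (x - y) + y by rewrite subrK.
  by case: hA => _ aa _; apply: aa.
Qed.


Definition dcc_in (R : pzRingType) (M : lmodType R) (N : M -> Prop) :=
  forall S : nat -> (M -> Prop), (forall n, subin N (S n)) ->
    (forall n x, S n.+1 x -> S n x) ->
    exists K, forall n, (K <= n)%N -> forall x, S K x -> S n x.

Definition spanw (R : pzRingType) (M : lmodType R) (w : nat -> M) (j : nat) : M -> Prop :=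
  fun x => exists c : nat -> R, x = \sum_(i < j) c i *: w i.

Lemma desc_le (T : Type) (S : nat -> (T -> Prop)) :
  (forall n x, S n.+1 x -> S n x) -> forall m n, (m <= n)%N -> forall x, S n x -> S m x.
Proof.
move=> hd m n /subnKC <-; elim: (n - m)%N => [|d IH] x; first by rewrite addn0.
by rewrite addnS => /hd /IH.
Qed.

Lemma spanw_sub (R : pzRingType) (M : lmodType R) (w : nat -> M) j :
  is_submodule (spanw w j).
Proof.
split.
- by exists (fun _ => 0); rewrite big1 // => i _; rewrite scale0r.
- move=> x y [c ->] [d ->]; exists (fun i => c i + d i).
  by rewrite -big_split /=; apply: eq_bigr => i _; rewrite scalerDl.
- move=> a x [c ->]; exists (fun i => a * c i).
  by rewrite scaler_sumr; apply: eq_bigr => i _; rewrite scalerA.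
Qed.

Lemma dcc_span (k : comPzRingType) (M : lmodType k) (w : nat -> M) j :
  artinian_ring k -> dcc_in (spanw w j).
Proof.
move=> hk; elim: j => [|j IH] S hS hd.
  exists 0%N => n _ x hx.
  have [[hSn _] [hS0 S0sp]] := (hS n, hS 0%N).
  have [c ->] := S0sp x hx; rewrite big_ord0; by case: hSn.
pose S' n := capP (S n) (spanw w j).
have [K1 hK1] : exists K, forall n, (K <= n)%N -> forall x, S' K x -> S' n x.
  apply: IH.
    move=> n; have [hSn _] := hS n; split; first exact: capP_sub (spanw_sub w j).
    by move=> x [].
  by move=> n x [h1 h2]; split => //; apply: hd.
pose I n : k -> Prop := fun r => exists s m, [/\ S n s, spanw w j m & r *: w j = s + m].
have [K2 hK2] : exists K, forall n, (K <= n)%N -> forall x, I K x -> I n x.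
  apply: hk.
    move=> n; have [[s0 sadd sz] _] := hS n; have [m0 madd mz] := spanw_sub w j.
    split.
    + by exists 0, 0; split => //; rewrite scale0r addr0.
    + move=> x y [s [m [hs hm ex]]] [s' [m' [hs' hm' ey]]].
      exists (s + s'), (m + m'); split; [exact: sadd|exact: madd|].
      by rewrite scalerDl ex ey addrACA.
    + move=> a x [s [m [hs hm ex]]]; exists (a *: s), (a *: m); split;
        [exact: sz|exact: mz|by rewrite -scalerA ex scalerDr].
  move=> n x [s [m [hs hm ex]]]; exists s, m; split => //; exact: hd.
exists (maxn K1 K2) => n hn x hx.
have hK1n : (K1 <= n)%N := leq_trans (leq_maxl _ _) hn.
have hK2n : (K2 <= n)%N := leq_trans (leq_maxr _ _) hn.
have [[hSK _] hSKsp] := (hS (maxn K1 K2), (hS (maxn K1 K2)).2).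
have [c ex] := hSKsp x hx.
move: ex; rewrite big_ord_recr /= => ex.
set m0 := \sum_(i < j) c i *: w i in ex.
have hm0 : spanw w j m0 by exists c.
have cI : I (maxn K1 K2) (c j).
  exists x, (- m0); split => //; first by apply: subN => //; exact: spanw_sub.
  by rewrite ex addrAC subrr add0r.
have hdI : forall p y, I p.+1 y -> I p y.
  by move=> p y [s [m [? ? ?]]]; exists s, m; split => //; exact: hd.
have : I n (c j).
  by apply: hK2 => //; apply: (desc_le hdI (leq_maxr K1 K2)).
move=> [s [m [hs hm es]]].
have hsK : S (maxn K1 K2) s by apply: (desc_le hd hn).
have hxs : S' n (x - s).
  apply: hK1 => //; split.
    apply: (desc_le hd (leq_maxl K1 K2)); exact: subB.
  have -> : x - s = m0 + m by rewrite ex es addrCA [X in X - s]addrC addrK.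
  by have [_ madd _] := spanw_sub w j; apply: madd.
have [h1 _] := hxs; have -> : x = (x - s) + s by rewrite subrK.
by have [[_ sadd _] _] := hS n; apply: sadd.
Qed.


Lemma dcc_fg (k : comPzRingType) (M : lmodType k) : artinian_ring k ->
  (exists (n : nat) (v : 'I_n -> M), forall x : M,
    exists c : 'I_n -> k, x = \sum_(i < n) c i *: v i) ->
  dcc_in (fun _ : M => True).
Proof.
move=> hk [n [v hv]] S hS hd.
pose w (i : nat) : M := if (insub i : option 'I_n) is Some j then v j else 0.
apply: (@dcc_span k M w n hk S) => // p; have [hSp _] := hS p; split => // x _.
have [c ->] := hv x.
exists (fun i => if (insub i : option 'I_n) is Some j then c j else 0).
by apply: eq_bigr => i _; rewrite /w valK.
Qed.

Lemma min_nonflen (R : pzRingType) (M : lmodType R) :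
  dcc_in (fun _ : M => True) -> ~ flen (fun _ : M => True) ->
  exists N0 : M -> Prop, [/\ is_submodule N0, ~ flen N0 &
    forall A, is_submodule A -> strict_subset A N0 -> flen A].
Proof.
move=> hdcc hnf; apply: NNPP => hne.
have step : forall N : M -> Prop, is_submodule N -> ~ flen N ->
    exists A, [/\ is_submodule A, strict_subset A N & ~ flen A].
  move=> N sN fN; apply: NNPP => h; apply: hne; exists N; split => //.
  move=> A sA st; apply: NNPP => fA; apply: h; by exists A.
pose F (N : M -> Prop) := epsilon (inhabits (fun _ : M => True))
   (fun A => [/\ is_submodule A, strict_subset A N & ~ flen A]).
pose S n := iter n F (fun _ => True).
have hT : is_submodule (fun _ : M => True) by [].
have hS : forall n, is_submodule (S n) /\ ~ flen (S n).
  elim=> [|n [h1 h2]]; first by [].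
  have := epsilon_spec (inhabits (fun _ : M => True))
     (fun A => [/\ is_submodule A, strict_subset A (S n) & ~ flen A]) (step _ h1 h2).
  by case=> a b c; split.
have hst : forall n, strict_subset (S n.+1) (S n).
  move=> n; have [h1 h2] := hS n.
  have := epsilon_spec (inhabits (fun _ : M => True))
     (fun A => [/\ is_submodule A, strict_subset A (S n) & ~ flen A]) (step _ h1 h2).
  by case.
have [K hK] := hdcc S (fun n => conj (hS n).1 (fun _ _ => I)) (fun n x hx => (hst n).1 x hx).
have [_ [x [x1 x2]]] := hst K; apply: x2; exact: hK.
Qed.


Lemma flen_zero (R : pzRingType) (M : lmodType R) (N : M -> Prop) :
  (forall x, N x -> x = 0) -> flen N.
Proof.
move=> hN; exists 0%N => m S hS hst; case: m hS hst => [//|m] hS hst.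
have m0 : (0 < m.+1)%N by [].
have [_ [y [y1 y2]]] := hst 0%N m0.
have [[h0 _ _] _] := hS 0%N (leq0n _).
have [_ hN1] := hS 1%N m0.
by exfalso; apply: y2; rewrite (hN _ (hN1 _ y1)).
Qed.

Lemma core_contra (k : comPzRingType) (M : lmodType k) (N0 : M -> Prop) :
  artinian_ring k -> is_submodule N0 -> ~ flen N0 ->
  (forall A, is_submodule A -> strict_subset A N0 -> flen A) -> False.
Proof.
move=> hk hN hnf hprop.
have [n0 nadd nsc] := hN.
have [x0 [Nx0 x0n0]] : exists x0, N0 x0 /\ x0 <> 0.
  apply: NNPP => h; apply: hnf; apply: flen_zero => x Nx; apply: NNPP => xn; apply: h; by exists x.
pose P (c : k) := forall x, N0 x -> c *: x = 0.
have dich : forall c, P c \/ (forall x, N0 x -> exists y, N0 y /\ x = c *: y).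
  move=> c; case: (classic (forall x, N0 x -> exists y, N0 y /\ x = c *: y)) => [h|h]; first by right.
  left; apply: NNPP => hP; apply: hnf; apply: (flen_map (c := c) hN).
  - apply: hprop.
    + split; [by split => //; rewrite scaler0
              |by move=> x y [? e1] [? e2]; split; [exact: nadd|rewrite scalerDr e1 e2 addr0]
              |by move=> r x [? e1]; split; [exact: nsc|rewrite scalerA mulrC -scalerA e1 scaler0]].
    + split; first by move=> x [].
      apply: NNPP => hn; apply: hP => x Nx; apply: NNPP => cx; apply: hn; by exists x; split => //; case=> _ e; exact: cx e.
  - apply: hprop.
    + split; [by exists 0; rewrite scaler0
              |by move=> x y [a [? ->]] [b [? ->]]; exists (a + b); rewrite scalerDr; split => //; exact: nadd
              |by move=> r x [a [? ->]]; exists (r *: a); rewrite !scalerA mulrC; split => //; exact: nsc].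
    + split; first by move=> y [x [? ->]]; exact: nsc.
      apply: NNPP => hn; apply: h => x Nx; apply: NNPP => hy; apply: hn; exists x; split => //.
have surj : forall c, ~ P c -> forall x, N0 x -> exists y, N0 y /\ x = c *: y.
  by move=> c hc; case: (dich c).
have nP1 : ~ P 1 by move=> h; apply: x0n0; rewrite -(h _ Nx0) scale1r.
have prime : forall a b, ~ P a -> ~ P b -> ~ P (a * b).
  move=> a b ha hb hab; have [y [Ny ey]] := surj a ha _ Nx0.
  have [z [Nz ez]] := surj b hb _ Ny.
  by apply: x0n0; rewrite ey ez scalerA hab.
have primeX : forall c n, ~ P c -> ~ P (c ^+ n).
  by move=> c n hc; elim: n => [|n IH]; [rewrite expr0|rewrite exprS; exact: prime].
have field : forall c, ~ P c -> exists b, forall x, N0 x -> (b * c) *: x = x.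
  move=> c hc.
  pose I n : k -> Prop := fun y => exists r p, P p /\ y = c ^+ n * r + p.
  have [N hN'] : exists N, forall n, (N <= n)%N -> forall x, I N x -> I n x.
    apply: hk.
      move=> n; split.
      + by exists 0, 0; split; [move=> x _; rewrite scale0r|rewrite mulr0 addr0].
      + move=> x y [r [p [hp ->]]] [r' [p' [hp' ->]]]; exists (r + r'), (p + p'); split.
          by move=> z Nz; rewrite scalerDl hp // hp' // addr0.
        by rewrite mulrDr addrACA.
      + move=> a x [r [p [hp ->]]]; exists (a * r), (a * p); split.
          by move=> z Nz; rewrite -scalerA hp // scaler0.
        by rewrite mulrDr mulrCA.
    move=> n x [r [p [hp ->]]]; exists (c * r), p; split => //.
    by rewrite exprS mulrCA mulrA.  
  have : I N.+1 (c ^+ N) by apply: hN' => //; exists 1, 0; split; [move=> z _; rewrite scale0r|rewrite mulr1 addr0].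
  move=> [r [p [hp ep]]]; exists r => x Nx.
  have hq : P (1 - c * r).
    apply: NNPP => hq; apply: (prime _ _ (primeX c N hc) hq).
    have -> : c ^+ N * (1 - c * r) = p.
      by rewrite mulrBr mulr1 mulrA -exprSr {1}ep addrAC subrr add0r.
    exact: hp.
  have := hq x Nx; rewrite scalerBl scale1r mulrC => /eqP; rewrite subr_eq0 => /eqP <-.
  done.
pose Q (H : M -> Prop) := [/\ forall x, H x -> N0 x, ~ H x0,
   (forall x y, H x -> H y -> H (x + y)) & (forall (a : k) x, H x -> H (a *: x))].
have [A [[AN Ax0 Aadd Asc] Amax]] : exists A, Q A /\ forall B, classical_sets.proper A B -> ~ Q B.
  apply: classical_sets.Zorn_bigcup => F FQ Ftot.
  split.
  - move=> x [X FX Xx]; have [h _ _ _] := FQ X FX; exact: h.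
  - move=> [X FX Xx]; have [_ h _ _] := FQ X FX; exact: h.
  - move=> x y [X FX Xx] [Y FY Yy]; case: (Ftot X Y FX FY) => sub.
      by exists Y => //; have [_ _ h _] := FQ Y FY; apply: h => //; exact: sub.
    by exists X => //; have [_ _ h _] := FQ X FX; apply: h => //; exact: sub.
  - by move=> a x [X FX Xx]; exists X => //; have [_ _ _ h] := FQ X FX; exact: h.
have A0 : A 0.
  case: (classic (exists a, A a)) => [[a Aa]|nA]; first by rewrite -(scale0r a); exact: Asc.
  exfalso; apply: (Amax (fun y => y = 0)).
  - split; first by move=> a Aa; exfalso; apply nA; exists a.
    by move=> h; apply: nA; exists 0; exact: h 0 erefl.
  - split; [by move=> y ->|by move=> h; apply x0n0|by move=> x y -> ->; rewrite addr0|by move=> a x ->; rewrite scaler0].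
have hA : is_submodule A by split.
pose Kx := fun z => exists c : k, z = c *: x0.
have span : forall y, N0 y -> sumP A Kx y.
  move=> y Ny; apply: NNPP => hy.
  apply: (Amax (sumP A (fun z => exists c : k, z = c *: y))).
  - split; first by move=> a Aa; exists a, 0; split; [done|exists 0; rewrite scale0r|rewrite addr0].
    move=> h; apply: hy.
    have : sumP A (fun z => exists c : k, z = c *: y) y.
      by exists 0, y; split; [done|exists 1; rewrite scale1r|rewrite add0r].
    by move=> /h Ay; exists y, 0; split; [done|exists 0; rewrite scale0r|rewrite addr0].
  - split.
    + move=> z [a [h [Aa [c ->] ->]]]; apply: nadd; [exact: AN|exact: nsc].
    + move=> [a [h [Aa [c eh] e]]].
      case: (classic (P c)) => [Pc|nPc].
        by apply: Ax0; rewrite e eh (Pc _ Ny) addr0.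
      have [b hb] := field c nPc.
      have ey : y = b *: h by rewrite eh scalerA (hb y Ny).
      apply: hy; exists (- (b *: a)), (b *: x0); split.
      * by apply: subN => //; exact: Asc.
      * by exists b.
      * by rewrite {1}ey e scalerDr addKr.
    + move=> x z [a [h [Aa [c ->] ->]]] [a' [h' [Aa' [c' ->] ->]]].
      exists (a + a'), ((c + c') *: y); split; [exact: Aadd|by exists (c + c')|].
      by rewrite scalerDl addrACA.
    + move=> r x [a [h [Aa [c ->] ->]]].
      exists (r *: a), ((r * c) *: y); split; [exact: Asc|by exists (r * c)|].
      by rewrite scalerDr scalerA.
have flA : flen A.
  apply: hprop => //; split => //; exists x0; split => //.
apply: hnf; apply: (@flen_ext _ _ N0 A 1%N hN (conj hA AN) flA).
move=> m S hS hst; case: m hS hst => [|[|m]] // hS hst; exfalso.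
have [s01 [z [z1 z2]]] := hst 0%N isT.
have [s12 [t [t1 t2]]] := hst 1%N isT.
have [S1sub S1A S1N] := hS 1%N isT.
have [_ S0A _] := hS 0%N isT.
have [_ _ S2N] := hS 2%N isT.
have [a [h [Aa [c eh] ez]]] := span z (S1N z z1).
case: (classic (P c)) => [Pc|nPc].
  by apply: z2; rewrite ez eh (Pc _ Nx0) addr0; exact: S0A.
have [b hb] := field c nPc.
have x0S1 : S 1%N x0.
  rewrite -(hb x0 Nx0) -scalerA -eh.
  have -> : h = z - a by rewrite ez addrAC subrr add0r.
  by case: (S1sub) => _ _ sz; apply: sz; apply: subB => //; exact: S1A.
apply: t2; have [a' [h' [Aa' [c' ->] ->]]] := span t (S2N t t1).
case: (S1sub) => _ sa sz; apply: sa; [exact: S1A|exact: sz].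
Qed.


Definition smap (R : pzRingType) (V : lmodType R) (y : V) : R^o -> V := fun a => (a : R) *: y.

Lemma smap_lin (R : pzRingType) (V : lmodType R) (y : V) : linear_for *:%R (smap y).
Proof. by move=> a u v; rewrite /smap scalerDl scalerA. Qed.

HB.instance Definition _ (R : pzRingType) (V : lmodType R) (y : V) :=
  GRing.isLinear.Build R R^o V *:%R (smap y) (smap_lin y).

Lemma regular_projective (R : pzRingType) : projective_mod (R^o).
Proof.
move=> M N _ _ g h gs; have [m hm] := gs (h 1).
exists (smap m) => p; rewrite /smap linearZ /= hm -linearZ /=.
by congr (h _); rewrite /GRing.scale /= mulr1.
Qed.

Lemma L_flen (k : comPzRingType) (L : algType k) : artin_algebra L -> finite_length (L^o).
Proof.
move=> [hk hfg].
have [n hn] : flen (fun _ : L => True).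
  apply: NNPP => nf.
  have [N0 [h1 h2 h3]] := min_nonflen (dcc_fg hk hfg) nf.
  exact: (core_contra hk h1 h2 h3).
exists n => m S hS hst; apply: (hn m S) => // i hi; split => //.
have [s0 sa sz] := hS i hi; split => // c x hx.
have -> : c *: x = (c *: (1 : L)) * x by rewrite -scalerAl mul1r.
exact: (sz (c *: (1 : L)) x hx).
Qed.

Local Close Scope ring_scope.
Theorem proposition8p1 (k : comPzRingType) (L : algType k)
  (hL : artin_algebra L) (C X Y : lmodType L)
  (hC : finite_length C) (hX : finite_length X) (hY : finite_length Y)
  (f : {linear X -> Y}) (hf : right_determined C f) :
  surjective_map f <->
  (forall u : {linear C -> Y}, factors_through_projective u ->
     factors_through u f).
Proof.
split.
- move=> fs u [P [a [b [hP pP hab]]]].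
  have [l hl] := pP X Y hX hY f b fs.
  exists (l \o a : {linear C -> X}) => c /=.
  by rewrite hl hab.
- move=> hR y.
  pose fp := (smap y : {linear GRing.regular L -> Y}).
  have [h hh] : exists h : {linear GRing.regular L -> X}, forall x, f (h x) = fp x.
    apply: (hf _ (L_flen hL) fp) => phi.
    apply: (hR (fp \o phi : {linear C -> Y})).
    exists (GRing.regular L), phi, fp; split => //; [exact: L_flen|exact: regular_projective].
  exists (h 1%R); rewrite hh /fp /smap /=; exact: GRing.scale1r.
Qed.
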